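(* Under Assumptions A1 and A2, for every compact set $B\subset(0,\infty)^2$, $$\lim_{t\to\infty}\sup_{(x,y)\in B}\Big|\frac{\widehat C_v\big(\overline F(xt),\overline F(yt)\big)}{\big(\overline F(t)\big)^{\kappa-1}\ell\big(\overline F(t)\big)}-\tau_v\big(x^{-\alpha},y^{-\alpha}\big)\Big|=0.$$
   Context: $\mathrm{RV}_\gamma$: $f(tx)/f(t)\to x^\gamma$ as $t\to\infty$; slowly varying at $0$: $\ell(st)/\ell(t)\to1$ as $t\downarrow0$. Assumption A1: $X,Y$ nonnegative continuous random variables with common distribution function $F$, $\overline F=1-F\in\mathrm{RV}_{-\alpha}$, $\alpha>0$. The survival copula $\widehat C$ satisfies $\Pr(X>x,Y>y)=\widehat C(\overline F(x),\overline F(y))$; $\widehat C_u,\widehat C_v$ its partial derivatives, $\tau_v=\partial\tau/\partial v$. Assumption A2: $\widehat C$ symmetric, twice differentiable on $[0,1]^2$; there exist $\kappa\in[1,2]$, $\ell$ slowly varying at $0$, $\tau\not\equiv0$ continuously differentiable on $[0,\infty)^2$ with $\lim_{t\downarrow0}\widehat C(ut,vt)/(t^\kappa\ell(t))=\tau(u,v)$ for all $u,v\ge0$; $\widehat C_u(u,v)$ nonincreasing in $u$, $\widehat C_v(u,v)$ nonincreasing in $v$. *)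

(* Defs.v *)
From HB Require Import structures.
From mathcomp Require Import all_boot all_order all_algebra.
From mathcomp Require Import all_classical all_reals all_analysis.
Set Implicit Arguments. Unset Strict Implicit. Unset Printing Implicit Defensive.
Import Order.TTheory GRing.Theory Num.Theory.
Import numFieldNormedType.Exports.
Local Open Scope classical_set_scope.
Local Open Scope ring_scope.

Section Defs.
Variable R : realType.

Definition Fbar (F : R -> R) (x : R) : R := 1 - F x.

Definition regularly_varying (gamma : R) (f : R -> R) : Prop :=
  forall x : R, 0 < x -> (f (t * x) / f t) @[t --> +oo] --> x `^ gamma.

Definition slowly_varying_at0 (l : R -> R) : Prop :=
  (\forall t \near 0^'+, 0 < l t) /\
  forall s : R, 0 < s -> (l (s * t) / l t) @[t --> 0^'+] --> (1 : R).

Definition partial_u (f : R * R -> R) (p : R * R) : R := 'D_((1 : R), (0 : R)) f p.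
Definition partial_v (f : R * R -> R) (p : R * R) : R := 'D_((0 : R), (1 : R)) f p.

Definition unit_square : set (R * R) :=
  [set p | 0 <= p.1 <= 1 /\ 0 <= p.2 <= 1].
Definition quadrant : set (R * R) := [set p | 0 <= p.1 /\ 0 <= p.2].
Definition open_quadrant : set (R * R) := [set p | 0 < p.1 /\ 0 < p.2].

Definition twice_differentiable_on (A : set (R * R)) (f : R * R -> R) : Prop :=
  forall p, A p ->
    [/\ differentiable f p, differentiable (partial_u f) p
      & differentiable (partial_v f) p].

Definition C1_on (A : set (R * R)) (f : R * R -> R) : Prop :=
  [/\ forall p, A p -> differentiable f p,
      {within A, continuous (partial_u f)}
    & {within A, continuous (partial_v f)}].

End Defs.
Arguments unit_square R : clear implicits.
Arguments quadrant R : clear implicits.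
Arguments open_quadrant R : clear implicits.

(* Main.v *)
Require Import Defs.
From HB Require Import structures.
From mathcomp Require Import all_boot all_order all_algebra.
From mathcomp Require Import all_classical all_reals all_analysis.
Import Order.TTheory GRing.Theory Num.Theory.
Import numFieldNormedType.Exports.
From mathcomp Require Import ring lra.
Local Open Scope classical_set_scope.
Local Open Scope ring_scope.

Section Helpers.
Variable R : realType.

Lemma pu_derive (C : R * R -> R) (u w : R) : differentiable C (u, w) ->
  is_derive u 1 (fun h => C (h, w)) (partial_u C (u, w)).
Proof.
move=> dC.
have E : (fun h : R => h^-1 *: (((fun h0 => C (h0, w)) \o shift u) (h *: 1) - C (u, w)))
  = (fun h : R => h^-1 *: ((C \o shift (u, w)) (h *: ((1:R), (0:R))) - C (u, w))).
  apply/funext => h /=; congr (_ *: (C _ - _)).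
  change ((h%:A + u, w) = (h *: (1:R) + u, h *: (0:R) + w)); by rewrite scaler0 add0r.
have dv : derivable C (u, w) ((1:R), (0:R)) by exact: diff_derivable.
split; first by rewrite /derivable E.
by rewrite /partial_u /derive E.
Qed.

Lemma pv_derive (C : R * R -> R) (u w : R) : differentiable C (u, w) ->
  is_derive w 1 (fun h => C (u, h)) (partial_v C (u, w)).
Proof.
move=> dC.
have E : (fun h : R => h^-1 *: (((fun h0 => C (u, h0)) \o shift w) (h *: 1) - C (u, w)))
  = (fun h : R => h^-1 *: ((C \o shift (u, w)) (h *: ((0:R), (1:R))) - C (u, w))).
  apply/funext => h /=; congr (_ *: (C _ - _)).
  change ((u, h%:A + w) = (h *: (0:R) + u, h *: (1:R) + w)); by rewrite scaler0 add0r.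
have dv : derivable C (u, w) ((0:R), (1:R)) by exact: diff_derivable.
split; first by rewrite /derivable E.
by rewrite /partial_v /derive E.
Qed.

Section Conc.
Variables (f df : R -> R) (lo hi : R).
Hypothesis fd : forall x, lo <= x <= hi -> is_derive x 1 f (df x).
Hypothesis dmono : forall x y, lo <= x -> x <= y -> y <= hi -> df y <= df x.

Lemma mvt_in p q : lo <= p -> p < q -> q <= hi ->
  exists2 c, p < c < q & f q - f p = df c * (q - p).
Proof.
move=> lp pq qh.
have H1 : forall x, x \in `]p, q[%R -> is_derive x 1 f (df x).
  move=> x; rewrite in_itv /= => /andP[a b]; apply: fd.
  by rewrite (le_trans lp (ltW a)) (le_trans (ltW b) qh).
have H2 : {within `[p, q], continuous f}.
  apply: derivable_within_continuous => x; rewrite in_itv /= => /andP[a b].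
  have /fd [] // : lo <= x <= hi.
  by rewrite (le_trans lp a) (le_trans b qh).
have [c cin E] := @MVT R f df p q pq H1 H2.
by exists c => //; move: cin; rewrite in_itv.
Qed.
Lemma dleft p q z : lo <= p -> p < q -> q <= z -> z <= hi ->
  df z <= (f q - f p) / (q - p).
Proof.
move=> lp pq qz zh.
have [c /andP[pc cq] E] := mvt_in _ _ lp pq (ltac:(lra) : q <= hi).
rewrite E mulfK; last by rewrite subr_eq0 gt_eqF.
apply: dmono; lra.
Qed.

Lemma dright z p q : lo <= z -> z <= p -> p < q -> q <= hi ->
  (f q - f p) / (q - p) <= df z.
Proof.
move=> lz zp pq qh.
have [c /andP[pc cq] E] := mvt_in _ _ (ltac:(lra) : lo <= p) pq qh.
rewrite E mulfK; last by rewrite subr_eq0 gt_eqF.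
apply: dmono; lra.
Qed.

Lemma chord p0 p1 z : lo <= p0 -> p0 < p1 -> p1 <= z -> z <= hi ->
  f z <= f p1 + (z - p1) * ((f p1 - f p0) / (p1 - p0)).
Proof.
move=> l0 h01 h1z zh.
have [e|lt1z] := eqVneq p1 z; first by rewrite e subrr mul0r addr0.
have {}lt1z : p1 < z by rewrite lt_neqAle lt1z.
have l1 : lo <= p1 by lra.
have [c /andP[pc cq] E] := mvt_in _ _ l1 lt1z zh.
have : df c <= (f p1 - f p0) / (p1 - p0).
  by apply: dleft => //; lra.
move=> H.
have : df c * (z - p1) <= (z - p1) * ((f p1 - f p0) / (p1 - p0)).
  by rewrite mulrC ler_wpM2l // subr_ge0 ltW.
rewrite -E; lra.
Qed.

Lemma minlow L p1 z p2 : lo <= p1 -> p1 <= z -> z <= p2 -> p2 <= hi ->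
  L <= f p1 -> L <= f p2 -> L <= f z.
Proof.
move=> l1 h1z hz2 h2 L1 L2.
have [e|lt1z] := eqVneq p1 z; first by rewrite -e.
have [e|ltz2] := eqVneq z p2; first by rewrite e.
have {}lt1z : p1 < z by rewrite lt_neqAle lt1z.
have {}ltz2 : z < p2 by rewrite lt_neqAle ltz2.
have [c1 /andP[a1 b1] E1] := mvt_in _ _ l1 lt1z (ltac:(lra) : z <= hi).
have [c2 /andP[a2 b2] E2] := mvt_in _ _ (ltac:(lra) : lo <= z) ltz2 h2.
have D : df c2 <= df c1 by apply: dmono; lra.
have [c1p|c1n] := leP 0 (df c1).
  have : 0 <= df c1 * (z - p1) by rewrite mulr_ge0 // subr_ge0 ltW.
  rewrite -E1; lra.
have : df c2 * (p2 - z) <= 0.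
  by rewrite mulr_le0_ge0 // ?subr_ge0 ?(ltW ltz2) //; lra.
rewrite -E2; lra.
Qed.
End Conc.
End Helpers.
Arguments pu_derive {R C u w}.
Arguments minlow {R f df lo hi}.
Arguments chord {R f df lo hi}.
Arguments dleft {R f df lo hi}.
Arguments dright {R f df lo hi}.
Arguments mvt_in {R f df lo hi}.
Arguments pv_derive {R C u w}.

Lemma F_mono (R : realType) (d : measure_display) (T : measurableType d)
  (P : probability T R) (X : {RV P >-> R}) (F : R -> R) :
  (forall x, P [set w | X w <= x] = (F x)%:E) ->
  forall x y, x <= y -> Fbar F y <= Fbar F x.
Proof.
move=> HF x y xy; rewrite /Fbar; suff : F x <= F y by lra.
rewrite -lee_fin -!HF.
have mX : forall z, measurable [set w | X w <= z].
  move=> z; have := measurable_funPTI X (measurable_itv `]-oo, z]).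
  by congr measurable; apply/seteqP; split => w /=; rewrite in_itv /=.
apply: le_measure; rewrite ?inE //.
by move=> w /= /le_trans; apply.
Qed.


Section Core.
Variable R : realType.

Lemma tri (x y u e : R) : `|x - y| < e / 2 -> `|x - u| < e / 2 -> `|u - y| < e.
Proof.
rewrite !ltr_norml => /andP[h1 h2] /andP[h3 h4].
by apply/andP; split; lra.
Qed.

Lemma core (f df : R -> R) (s D a dl a' T z : R) :
  (forall x : R, 0 <= x <= 1 -> is_derive x 1 f (df x)) ->
  (forall x y : R, 0 <= x -> x <= y -> y <= 1 -> df y <= df x) ->
  0 < s -> 0 < D -> 0 < dl -> 3 * dl <= a -> (a + dl) * s <= 1 ->
  `|a' - a| <= dl -> 0 < z ->
  `|f ((a - 2 * dl) * s) / D - T| < z ->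
  `|f ((a - dl) * s) / D - T| < z ->
  `|f ((a + dl) * s) / D - T| < z ->
  `|f (a' * s) / D - T| <= 8 * z.
Proof.
move=> fd dm sp Dp dl0 dla bnd ha' z0 g0 g1 g2.
have [ha1 ha2] : a - dl <= a' /\ a' <= a + dl.
  by move: ha'; rewrite ler_norml => /andP[h1 h2]; split; lra.
have ad0 : 0 <= a - 2 * dl by lra.
have ad1 : 0 <= a - dl by lra.
have ad01 : a - 2 * dl < a - dl by lra.
have sp' := ltW sp.
have a'b : a' * s <= 1 by apply: le_trans bnd; rewrite ler_wpM2r.
have fE : forall u : R, f u = f u / D * D by move=> u; rewrite divfK // gt_eqF.
move: g0 g1 g2; rewrite !ltr_norml => /andP[g0a g0b] /andP[g1a g1b] /andP[g2a g2b].
have Lo := minlow fd dm ((T - z) * D) ((a - dl) * s) (a' * s) ((a + dl) * s)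
  (mulr_ge0 ad1 sp') (ler_wpM2r sp' ha1) (ler_wpM2r sp' ha2) bnd.
rewrite [f (a' * s)]fE [f ((a - dl) * s)]fE [f ((a + dl) * s)]fE !ler_pM2r // in Lo.
have {}Lo := Lo ltac:(lra) ltac:(lra).
have Up := chord fd dm ((a - 2 * dl) * s) ((a - dl) * s) (a' * s)
  (mulr_ge0 ad0 sp') ltac:(by rewrite ltr_pM2r) (ler_wpM2r sp' ha1) a'b.
rewrite [f (a' * s)]fE [f ((a - dl) * s)]fE [f ((a - 2 * dl) * s)]fE in Up.
move: (f (a' * s) / D) (f ((a - dl) * s) / D) (f ((a - 2 * dl) * s) / D) Lo g0a g0b g1a g1b Up
  => g' G1 G0 Lo g0a g0b g1a g1b Up.
have key : (a' * s - (a - dl) * s) * ((G1 * D - G0 * D) / ((a - dl) * s - (a - 2 * dl) * s)) =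
   D * ((a' - (a - dl)) / dl * (G1 - G0)).
  field; apply/andP; split; first exact: lt0r_neq0.
  have -> : (a - dl) * s - (a - 2 * dl) * s = dl * s by ring.
  by rewrite mulf_neq0 // gt_eqF.
rewrite key in Up.
have lam0 : 0 <= (a' - (a - dl)) / dl by rewrite divr_ge0 //; lra.
have lam2 : (a' - (a - dl)) / dl <= 2 by rewrite ler_pdivrMr //; lra.
move: ((a' - (a - dl)) / dl) lam0 lam2 Up => lam lam0 lam2 Up.
have {}Up : g' <= G1 + lam * (G1 - G0).
  by rewrite -(ler_pM2r Dp); lra.
have P1 : lam * (G1 - G0) <= lam * (2 * z) by rewrite ler_wpM2l //; lra.
have P2 : lam * (2 * z) <= 4 * z by nra.
rewrite ler_norml; apply/andP; split; lra.
Qed.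
Lemma aux_b (a dl w s : R) : 0 < a -> 0 < dl -> 3 * dl <= a -> 0 < w -> 0 < s ->
  s * (2 * a + w) < 1 -> (a + dl) * s <= 1 /\ 0 <= w * s <= 1.
Proof.
move=> a0 dl0 dla w0 s0 h.
have h1 : (a + dl) * s <= s * (2 * a + w).
  by rewrite mulrC ler_wpM2l ?ltW //; lra.
have h2 : w * s <= s * (2 * a + w).
  by rewrite mulrC ler_wpM2l ?ltW //; lra.
split; first lra.
by apply/andP; split; [rewrite mulr_ge0 // ltW | lra].
Qed.
Lemma nball (g : R -> R) (a eps : R) : 0 < eps -> {for a, continuous g} ->
  exists2 d, 0 < d & forall h, `|h - a| < d -> `|g h - g a| < eps.
Proof.
move=> e0 /cvgrPdist_lt /(_ eps e0) /nbhs_ballP [d d0 Hd].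
exists d => // h hd; rewrite distrC; apply: Hd.
by rewrite /ball /= distrC.
Qed.
Lemma scale_up (Cv C1 C2 s l kappa r : R) : 0 < s -> 0 < l -> 0 < kappa -> 0 < r ->
  Cv <= (C2 - C1) / (r * s) ->
  Cv / (s `^ (kappa - 1) * l) <= (C2 / (s `^ kappa * l) - C1 / (s `^ kappa * l)) / r.
Proof.
move=> s0 l0 k0 r0 H.
have P0 : 0 < s `^ (kappa - 1) by rewrite powR_gt0.
have -> : s `^ kappa = s * s `^ (kappa - 1) by rewrite mulr_powRB1 // ltW.
have E : (C2 / (s * s `^ (kappa - 1) * l) - C1 / (s * s `^ (kappa - 1) * l)) / r
  = ((C2 - C1) / (r * s)) / (s `^ (kappa - 1) * l).
  by field; rewrite !gt_eqF.
rewrite E ler_pM2r // invr_gt0 mulr_gt0 //.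
Qed.

Lemma scale_lo (Cv C1 C2 s l kappa r : R) : 0 < s -> 0 < l -> 0 < kappa -> 0 < r ->
  (C2 - C1) / (r * s) <= Cv ->
  (C2 / (s `^ kappa * l) - C1 / (s `^ kappa * l)) / r <= Cv / (s `^ (kappa - 1) * l).
Proof.
move=> s0 l0 k0 r0 H.
have P0 : 0 < s `^ (kappa - 1) by rewrite powR_gt0.
have -> : s `^ kappa = s * s `^ (kappa - 1) by rewrite mulr_powRB1 // ltW.
have E : (C2 / (s * s `^ (kappa - 1) * l) - C1 / (s * s `^ (kappa - 1) * l)) / r
  = ((C2 - C1) / (r * s)) / (s `^ (kappa - 1) * l).
  by field; rewrite !gt_eqF.
rewrite E ler_pM2r // invr_gt0 mulr_gt0 //.
Qed.

Lemma fin_arith (Q T cs tv1 tv2 g1 g2 g3 g4 t1 t2 t3 t4 r e : R) :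
  0 < r -> 0 < e ->
  Q <= (g2 - g1) / r -> (g4 - g3) / r <= Q ->
  `|g1 - t1| <= r * e / 8 -> `|g2 - t2| <= r * e / 8 ->
  `|g3 - t3| <= r * e / 8 -> `|g4 - t4| <= r * e / 8 ->
  t2 - t1 = tv1 * r -> t4 - t3 = tv2 * r ->
  `|tv1 - cs| < e / 4 -> `|tv2 - cs| < e / 4 -> `|T - cs| < e / 4 ->
  `|Q - T| <= e.
Proof.
move=> r0 e0 H1 H2 a1 a2 a3 a4 m1 m2 c1 c2 c3.
rewrite ler_pdivlMr // in H1; rewrite ler_pdivrMr // in H2.
move: a1 a2 a3 a4 c1 c2 c3; rewrite !ler_norml !ltr_norml.
move=> /andP[a1 a1'] /andP[a2 a2'] /andP[a3 a3'] /andP[a4 a4'].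
move=> /andP[c1 c1'] /andP[c2 c2'] /andP[c3 c3'].
have U : Q * r <= (tv1 + e / 4) * r by lra.
have L : (tv2 - e / 4) * r <= Q * r by lra.
rewrite ler_pM2r // in U; rewrite ler_pM2r // in L.
apply/andP; split; lra.
Qed.

Lemma min_pos (a b : R) : 0 < a -> 0 < b -> exists2 c, 0 < c & c <= a /\ c <= b.
Proof. by move=> a0 b0; case: (leP a b) => h; [exists a | exists b] => //; split; lra. Qed.

Lemma mul_le1 (c K s : R) : 0 <= c -> c <= K -> 0 < s -> s * K < 1 -> 0 <= c * s <= 1.
Proof.
move=> c0 cK s0 h; apply/andP; split; first by rewrite mulr_ge0 // ltW.
have : c * s <= s * K by rewrite mulrC ler_wpM2l // ltW.
lra.
Qed.

Lemma abs_bnd (x c d : R) : `|x - c| <= d -> c - d <= x /\ x <= c + d.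
Proof. by rewrite ler_norml => /andP[h1 h2]; split; lra. Qed.

Lemma abs_bnd_lt (x c d : R) : `|x - c| < d -> c - d < x /\ x < c + d.
Proof. by rewrite ltr_norml => /andP[h1 h2]; split; lra. Qed.

Lemma lt_ch (u a b c : R) : u < a -> a <= b -> b <= c -> u < c.
Proof. move=> h1 h2 h3; lra. Qed.

Lemma le_ch (u a b c d : R) : u <= a -> a <= b -> b <= c -> c <= d -> u <= d.
Proof. move=> h1 h2 h3 h4; lra. Qed.

Lemma vsand (f df : R -> R) (s aS bS r b : R) :
  (forall x : R, 0 <= x <= 1 -> is_derive x 1 f (df x)) ->
  (forall x y : R, 0 <= x -> x <= y -> y <= 1 -> df y <= df x) ->
  0 < s -> 0 < r -> 0 < aS -> 3 * r <= bS -> `|b - bS| <= r -> s * (2 * aS + 2 * bS) < 1 ->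
  df (b * s) <= (f ((bS - r) * s) - f ((bS - 2 * r) * s)) / (r * s) /\
  (f ((bS + 2 * r) * s) - f ((bS + r) * s)) / (r * s) <= df (b * s).
Proof.
move=> fd dm s0 r0 aS0 rb hb ss.
have [b1 b2] := abs_bnd _ _ _ hb.
have sl := ltW s0.
have hs : (bS + 2 * r) * s <= 1.
  have : (bS + 2 * r) * s <= s * (2 * aS + 2 * bS).
    by rewrite mulrC ler_wpM2l //; lra.
  lra.
have e1 : (bS - r) * s - (bS - 2 * r) * s = r * s by ring.
have e2 : (bS + 2 * r) * s - (bS + r) * s = r * s by ring.
split.
- rewrite -e1; apply: dleft fd dm _ _ _ _ _ _ _.
  + by rewrite mulr_ge0 //; lra.
  + by rewrite ltr_pM2r //; lra.
  + by rewrite ler_wpM2r //; lra.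
  + apply: le_trans hs; rewrite ler_wpM2r //; lra.
- rewrite -e2; apply: dright fd dm _ _ _ _ _ _ _.
  + by rewrite mulr_ge0 //; lra.
  + by rewrite ler_wpM2r //; lra.
  + by rewrite ltr_pM2r //; lra.
  + exact: hs.
Qed.

Lemma a_bnd (a aS dl bS s : R) : `|a - aS| <= dl -> dl <= aS -> 0 < bS -> 0 < s ->
  s * (2 * aS + 2 * bS) < 1 -> 0 <= a * s <= 1.
Proof.
move=> /(abs_bnd _ _ _) [h1 h2] h3 h4 h5 h6.
apply: (mul_le1 a (2 * aS + 2 * bS) s) => //; lra.
Qed.

End Core.
Arguments nball {R}.
Arguments aux_b {R a dl w s}.
Arguments core {R f df s D a dl a' T z}.
Arguments tri {R x y u e}.
Arguments lt_ch {R u a b c}.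
Arguments le_ch {R u a b c d}.
Arguments vsand {R f df s aS bS r b}.
Arguments a_bnd {R a aS dl bS s}.
Arguments min_pos {R a b}.
Arguments mul_le1 {R c K s}.
Arguments abs_bnd {R x c d}.
Arguments abs_bnd_lt {R x c d}.
Arguments scale_up {R Cv C1 C2 s l kappa r}.
Arguments scale_lo {R Cv C1 C2 s l kappa r}.
Arguments fin_arith {R Q T cs tv1 tv2 g1 g2 g3 g4 t1 t2 t3 t4 r e}.

Lemma tauv_near (R : realType) (tau : R * R -> R) (a b eps : R) :
  {within quadrant R, continuous (partial_v tau)} ->
  0 < a -> 0 < b -> 0 < eps ->
  exists2 r, 0 < r & forall u v, 0 <= u -> 0 <= v -> `|u - a| < r -> `|v - b| < r ->
     `|partial_v tau (u, v) - partial_v tau (a, b)| < eps.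
Proof.
move=> tauvc a0 b0 e0.
have := (subspace_continuousP _ _).1 tauvc (a, b) (conj (ltW a0) (ltW b0)).
move/cvgrPdist_lt => /(_ eps e0).
move=> H; have := H; rewrite /within /= => /nbhs_ballP [r r0 Hr].
exists r => // u v u0 v0 hu hv.
rewrite distrC; apply: (Hr (u, v)); last by split.
by split; rewrite /ball /= distrC.
Qed.


Section L1.
Variable R : realType.
Variables (Fb : R -> R) (alpha : R).
Hypothesis mono : forall x y, x <= y -> Fb y <= Fb x.
Hypothesis nneg : forall x, 0 <= Fb x.
Hypothesis apos : 0 < alpha.
Hypothesis rv : regularly_varying (- alpha) Fb.

Lemma two_pow_lt1 : 2 `^ (- alpha) < (1:R).
Proof.
rewrite /powR (negbTE (_ : (2:R) != 0)) // expR_lt1.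
by rewrite mulNr oppr_lt0 mulr_gt0 // ln_gt0 // ltr1n.
Qed.

Lemma two_pow_gt0 : 0 < 2 `^ (- alpha) :> R.
Proof. by rewrite powR_gt0. Qed.

Lemma Fb_pos : \forall t \near +oo, 0 < Fb t.
Proof.
have h2 := rv 2 (ltac:(by []) : (0:R) < 2).
have H0 : \forall t \near +oo, 0 < Fb (t * 2) / Fb t.
  by apply: cvgr_gt _ h2 _ two_pow_gt0.
near=> t; have H : 0 < Fb (t * 2) / Fb t by near: t.
rewrite lt_neqAle nneg andbT eq_sym; apply/negP => /eqP E.
by move: H; rewrite E invr0 mulr0 ltxx.
Unshelve. all: by end_near.
Qed.

Lemma Fb_cvg0 : Fb t @[t --> +oo] --> 0.
Proof.
have [q [qlt1 qgt0 qgt]] : exists q : R, [/\ q < 1, 0 < q & 2 `^ (- alpha) < q].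
  exists ((1 + 2 `^ (- alpha)) / 2).
  have := two_pow_lt1; have := two_pow_gt0; split; lra.
have h2 := rv 2 (ltac:(by []) : (0:R) < 2).
have Hq : \forall t \near +oo, Fb (t * 2) <= q * Fb t.
  have H : \forall t \near +oo, Fb (t * 2) / Fb t < q.
    by apply: cvgr_lt _ h2 _ qgt.
  near=> t.
  have pt : 0 < Fb t by near: t; exact: Fb_pos.
  have : Fb (t * 2) / Fb t < q by near: t.
  rewrite ltr_pdivrMr //; lra.
have [M [Mr HM]] := Hq.
pose M' := `|M| + 1.
have MM : M < M' by rewrite /M'; have := ler_norm M; lra.
have M'pos : 0 < M' by rewrite /M'; have := normr_ge0 M; lra.
have Hn : forall n, Fb (M' * 2 ^+ n) <= q ^+ n * Fb M'.
  elim=> [|n IH]; first by rewrite !expr0 mulr1 mul1r.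
  have ge : M' <= M' * 2 ^+ n.
    by rewrite ler_peMr ?(ltW M'pos) // exprn_ege1 // ler1n.
  have := HM (M' * 2 ^+ n) (lt_le_trans MM ge).
  rewrite exprSr mulrA => H; apply: (le_trans H).
  by rewrite exprS -mulrA ler_pM2l.
apply/cvgrPdist_lt => e e0.
have Hexp : (fun n => q ^+ n) @ \oo --> (0:R).
  by apply: cvg_expr; rewrite gtr0_norm.
have /cvgrPdist_lt /(_ (e / (Fb M' + 1))) := Hexp.
move=> /(_ ltac:(by rewrite divr_gt0 // ltr_wpDl)) [N _ HN].
have {HN} := HN N (leqnn N).
rewrite sub0r normrN ger0_norm ?exprn_ge0 ?(ltW qgt0) // => HqN.
exists (M' * 2 ^+ N); split; first by rewrite num_real.
move=> t tgt.
rewrite sub0r normrN ger0_norm //.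
have := mono _ _ (ltW tgt); have := Hn N.
have F0 := nneg M'.
have : q ^+ N * (Fb M' + 1) < e.
  by rewrite -ltr_pdivlMr // ltr_wpDl.
have : 0 <= q ^+ N by rewrite exprn_ge0 // ltW.
nra.
Unshelve. all: by end_near.
Qed.

Lemma Fb_right0 : Fb t @[t --> +oo] --> 0^'+.
Proof.
move=> A HA.
have H1 : nbhs (0:R) (fun x => 0 < x -> A x) by exact: HA.
have H2 := Fb_cvg0 _ H1.
have H3 := Fb_pos.
rewrite /= /nbhs /=.
near=> t.
have P1 : 0 < Fb t by near: t.
have P2 : 0 < Fb t -> A (Fb t) by near: t.
exact: P2.
Unshelve. all: by end_near.
Qed.


Lemma pow_cont (x : R) (g : R) : 0 < x -> {for x, continuous (fun y : R => y `^ g)}.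
Proof.
move=> x0.
have := @derivable_powR R 1 g x; rewrite in_itv /= andbT => /(_ x0).
by move/derivable1_diffP; apply: differentiable_continuous.
Qed.

Lemma ev_tpos : \forall t \near (+oo : set_system R), 0 < t.
Proof. by exists 0; split => // t. Qed.

Lemma rv_local (xs dt : R) : 0 < xs -> 0 < dt ->
  exists2 rho, 0 < rho & \forall t \near +oo, forall x, `|x - xs| < rho ->
    `|Fb (x * t) / Fb t - xs `^ (- alpha)| <= dt.
Proof.
move=> xs0 dt0.
have [r0 r00 Hr0] := nball _ _ _ (ltac:(lra) : 0 < dt / 2) (pow_cont _ (- alpha) xs0).
have [rho [rho0 rhox rhor]] : exists rho, [/\ 0 < rho, 2 * rho <= xs & 2 * rho <= r0].
  by case: (leP r0 xs) => h; [exists (r0 / 2) | exists (xs / 2)]; split; lra.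
have x10 : 0 < xs - rho by lra.
have x20 : 0 < xs + rho by lra.
have G1 : (xs - rho) `^ (- alpha) < xs `^ (- alpha) + dt / 2.
  have := Hr0 (xs - rho); rewrite addrAC subrr sub0r normrN gtr0_norm //.
  by move=> /(_ ltac:(lra)); rewrite ltr_norml => /andP[_ h]; lra.
have G2 : xs `^ (- alpha) - dt / 2 < (xs + rho) `^ (- alpha).
  have := Hr0 (xs + rho); rewrite addrAC subrr add0r gtr0_norm //.
  by move=> /(_ ltac:(lra)); rewrite ltr_norml => /andP[h _]; lra.
exists rho => //.
have E1 : \forall t \near +oo, Fb (t * (xs - rho)) / Fb t < xs `^ (- alpha) + dt / 2.
  by apply: cvgr_lt _ (rv _ x10) _ G1.
have E2 : \forall t \near +oo, xs `^ (- alpha) - dt / 2 < Fb (t * (xs + rho)) / Fb t.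
  by apply: cvgr_gt _ (rv _ x20) _ G2.
near=> t => x hx.
have tp : 0 < t by near: t; exact: ev_tpos.
have fp : 0 < Fb t by near: t; exact: Fb_pos.
have e1 : Fb (t * (xs - rho)) / Fb t < xs `^ (- alpha) + dt / 2 by near: t.
have e2 : xs `^ (- alpha) - dt / 2 < Fb (t * (xs + rho)) / Fb t by near: t.
have [hx1 hx2] : xs - rho <= x /\ x <= xs + rho.
  by move: hx; rewrite ltr_norml => /andP[h1 h2]; split; lra.
have m1 : Fb (x * t) <= Fb (t * (xs - rho)).
  by apply: mono; rewrite [x * t]mulrC; apply: ler_wpM2l => //; exact: ltW.
have m2 : Fb (t * (xs + rho)) <= Fb (x * t).
  by apply: mono; rewrite [x * t]mulrC; apply: ler_wpM2l => //; exact: ltW.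
have fi : 0 <= (Fb t)^-1 by rewrite invr_ge0 ltW.
have m1' := ler_wpM2r fi m1.
have m2' := ler_wpM2r fi m2.
rewrite ler_norml; apply/andP; split; lra.
Unshelve. all: by end_near.
Qed.

Variables (C tau : R * R -> R) (l : R -> R) (kappa : R).
Hypothesis Cdiff : forall u v : R, 0 <= u <= 1 -> 0 <= v <= 1 -> differentiable C (u, v).
Hypothesis kappa_pos : 0 < kappa.
Hypothesis lpos : \forall t \near 0^'+, 0 < l t.
Hypothesis taudiff : forall u v : R, 0 <= u -> 0 <= v -> differentiable tau (u, v).
Hypothesis tauvc : {within quadrant R, continuous (partial_v tau)}.
Hypothesis lim : forall u v : R, 0 <= u -> 0 <= v ->
  (C (u * t, v * t) / (t `^ kappa * l t)) @[t --> 0^'+] --> tau (u, v).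
Hypothesis monu : forall u1 u2 v : R, 0 <= u1 -> u1 <= u2 -> u2 <= 1 -> 0 <= v <= 1 ->
     partial_u C (u2, v) <= partial_u C (u1, v).
Hypothesis monv : forall u v1 v2 : R, 0 <= u <= 1 -> 0 <= v1 -> v1 <= v2 -> v2 <= 1 ->
     partial_v C (u, v2) <= partial_v C (u, v1).

Definition G (s u w : R) := C (u * s, w * s) / (s `^ kappa * l s).

Lemma ev_lim u w eps : 0 <= u -> 0 <= w -> 0 < eps ->
  \forall t \near +oo, `|tau (u, w) - G (Fb t) u w| < eps.
Proof.
move=> u0 w0 e0.
have H := cvg_comp Fb (fun s => C (u * s, w * s) / (s `^ kappa * l s))
  Fb_right0 (lim _ _ u0 w0).
by move/cvgrPdist_lt : H => /(_ eps e0).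
Qed.

Lemma ev_l : \forall t \near +oo, 0 < l (Fb t).
Proof. exact: Fb_right0 lpos. Qed.

Lemma ev_small K : 0 < K -> \forall t \near +oo, Fb t * K < 1.
Proof.
move=> K0.
have H : \forall t \near +oo, Fb t < K^-1.
  by apply: cvgr_lt _ Fb_cvg0 _ _; rewrite invr_gt0.
near=> t; have : Fb t < K^-1 by near: t.
by rewrite -ltr_pdivlMr // div1r.
Unshelve. all: by end_near.
Qed.

Lemma tau_cont_u a w : 0 < a -> 0 <= w -> {for a, continuous (fun h => tau (h, w))}.
Proof.
move=> a0 w0.
have [H _] := pu_derive (taudiff _ _ (ltW a0) w0).
by apply: differentiable_continuous; apply/derivable1_diffP.
Qed.




Lemma Gunif a w eta : 0 < a -> 0 < w -> 0 < eta ->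
  exists2 dl, 0 < dl & \forall t \near +oo, forall a', `|a' - a| <= dl ->
    `|G (Fb t) a' w - tau (a, w)| <= eta.
Proof.
move=> a0 w0 eta0.
have [z [z0 ze]] : exists z, 0 < z /\ z = eta / 8 by exists (eta / 8); split => //; lra.
have [d0 d00 Hd0] := nball _ _ _ (ltac:(lra) : 0 < z / 2) (tau_cont_u _ _ a0 (ltW w0)).
have [dl [dl0 dla dld]] : exists dl, [/\ 0 < dl, 3 * dl <= a & 3 * dl <= d0].
  by case: (leP d0 a) => h; [exists (d0 / 3) | exists (a / 3)]; split; lra.
exists dl => //.
have T0 : `|tau (a - 2 * dl, w) - tau (a, w)| < z / 2 by apply: Hd0; rewrite addrAC subrr sub0r normrN gtr0_norm; lra.
have T1 : `|tau (a - dl, w) - tau (a, w)| < z / 2 by apply: Hd0; rewrite addrAC subrr sub0r normrN gtr0_norm; lra.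
have T2 : `|tau (a + dl, w) - tau (a, w)| < z / 2 by apply: Hd0; rewrite addrAC subrr add0r gtr0_norm; lra.
near=> t; move=> a' ha'.
have sp : 0 < Fb t by near: t; exact: Fb_pos.
have lp : 0 < l (Fb t) by near: t; exact: ev_l.
have ss : Fb t * (2 * a + w) < 1 by near: t; apply: ev_small; lra.
have g0 : `|tau (a - 2 * dl, w) - G (Fb t) (a - 2 * dl) w| < z / 2.
  by near: t; apply: ev_lim; lra.
have g1 : `|tau (a - dl, w) - G (Fb t) (a - dl) w| < z / 2.
  by near: t; apply: ev_lim; lra.
have g2 : `|tau (a + dl, w) - G (Fb t) (a + dl) w| < z / 2.
  by near: t; apply: ev_lim; lra.
move: sp lp ss g0 g1 g2; move: (Fb t) => s sp lp ss g0 g1 g2.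
have Dp : 0 < s `^ kappa * l s by rewrite mulr_gt0 // powR_gt0.
have [bnd wsb] := aux_b a0 dl0 dla w0 sp ss.
have fd : forall x : R, 0 <= x <= 1 -> is_derive x 1 (fun u => C (u, w * s)) (partial_u C (x, w * s)).
  by move=> x hx; apply: pu_derive; apply: Cdiff.
have dm : forall x y : R, 0 <= x -> x <= y -> y <= 1 ->
    partial_u C (y, w * s) <= partial_u C (x, w * s).
  by move=> x y h1 h2 h3; apply: monu.
have := core fd dm sp Dp dl0 dla bnd ha' z0 (tri T0 g0) (tri T1 g1) (tri T2 g2).
by rewrite ze [8 * _]mulrC divfK.
Unshelve. all: by end_near.
Qed.

Lemma local (xs ys e : R) : 0 < xs -> 0 < ys -> 0 < e ->
  exists2 rho, 0 < rho & \forall t \near +oo, forall x y : R,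
    `|x - xs| < rho -> `|y - ys| < rho ->
    `|partial_v C (Fb (x * t), Fb (y * t)) / (Fb t `^ (kappa - 1) * l (Fb t))
       - partial_v tau (x `^ (- alpha), y `^ (- alpha))| <= e.
Proof.
move=> xs0 ys0 e0.
have [aS [aSE aS0]] : exists aS, aS = xs `^ (- alpha) /\ 0 < aS.
  by exists (xs `^ (- alpha)); split => //; rewrite powR_gt0.
have [bS [bSE bS0]] : exists bS, bS = ys `^ (- alpha) /\ 0 < bS.
  by exists (ys `^ (- alpha)); split => //; rewrite powR_gt0.
have e40 : 0 < e / 4 by lra.
have [r1 r10 Hr1] := tauv_near _ _ _ _ _ tauvc aS0 bS0 e40.
have [r [r0 rb rr1]] : exists r, [/\ 0 < r, 3 * r <= bS & 3 * r <= r1].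
  by case: (leP r1 bS) => h; [exists (r1 / 3) | exists (bS / 3)]; split; lra.
have w10 : 0 < bS - 2 * r by lra.
have w20 : 0 < bS - r by lra.
have w30 : 0 < bS + r by lra.
have w40 : 0 < bS + 2 * r by lra.
have fdt : forall x : R, 0 <= x <= bS + 3 * r ->
    is_derive x 1 (fun h => tau (aS, h)) (partial_v tau (aS, x)).
  move=> x /andP[x0 _]; apply: pv_derive; exact: taudiff (ltW aS0) x0.
have [c1 /andP[c1a c1b] M1] := mvt_in fdt (bS - 2 * r) (bS - r)
  ltac:(lra) ltac:(lra) ltac:(lra).
have [c2 /andP[c2a c2b] M2] := mvt_in fdt (bS + r) (bS + 2 * r)
  ltac:(lra) ltac:(lra) ltac:(lra).
have M1' : tau (aS, bS - r) - tau (aS, bS - 2 * r) = partial_v tau (aS, c1) * r.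
  by rewrite M1; congr (_ * _); lra.
have M2' : tau (aS, bS + 2 * r) - tau (aS, bS + r) = partial_v tau (aS, c2) * r.
  by rewrite M2; congr (_ * _); lra.
have TV1 : `|partial_v tau (aS, c1) - partial_v tau (aS, bS)| < e / 4.
  apply: Hr1; [exact: ltW | lra | by rewrite subrr normr0 | ].
  rewrite ltr_norml; apply/andP; split; lra.
have TV2 : `|partial_v tau (aS, c2) - partial_v tau (aS, bS)| < e / 4.
  apply: Hr1; [exact: ltW | lra | by rewrite subrr normr0 | ].
  rewrite ltr_norml; apply/andP; split; lra.
have eta0 : 0 < r * e / 8 by rewrite divr_gt0 // mulr_gt0.
have [d1 d10 U1] := Gunif _ _ _ aS0 w10 eta0.
have [d2 d20 U2] := Gunif _ _ _ aS0 w20 eta0.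
have [d3 d30 U3] := Gunif _ _ _ aS0 w30 eta0.
have [d4 d40 U4] := Gunif _ _ _ aS0 w40 eta0.
have [d12 d120 [d12a d12b]] := min_pos d10 d20.
have [d34 d340 [d34a d34b]] := min_pos d30 d40.
have [d14 d140 [d14a d14b]] := min_pos d120 d340.
have [dl dl0 [dla dlb]] := min_pos d140 aS0.
have [rx rx0 Ax] := rv_local _ _ xs0 dl0.
have [ry ry0 Ay] := rv_local _ _ ys0 r0.
have [p1 p10 P1] := nball _ _ _ r10 (pow_cont _ (- alpha) xs0).
have [p2 p20 P2] := nball _ _ _ r10 (pow_cont _ (- alpha) ys0).
have [q1 q10 [q1a q1b]] := min_pos rx0 ry0.
have [q2 q20 [q2a q2b]] := min_pos p10 p20.
have [rho rho0 [rhoa rhob]] := min_pos q10 q20.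
exists rho => //.
have K0 : 0 < 2 * aS + 2 * bS by lra.
near=> t.
have sp : 0 < Fb t by near: t; exact: Fb_pos.
have lp : 0 < l (Fb t) by near: t; exact: ev_l.
have ss : Fb t * (2 * aS + 2 * bS) < 1 by near: t; exact: ev_small.
have Axt : forall x, `|x - xs| < rx -> `|Fb (x * t) / Fb t - xs `^ (- alpha)| <= dl.
  by near: t.
have Ayt : forall y, `|y - ys| < ry -> `|Fb (y * t) / Fb t - ys `^ (- alpha)| <= r.
  by near: t.
have U1t : forall a', `|a' - aS| <= d1 -> `|G (Fb t) a' (bS - 2 * r) - tau (aS, bS - 2 * r)| <= r * e / 8.
  by near: t.
have U2t : forall a', `|a' - aS| <= d2 -> `|G (Fb t) a' (bS - r) - tau (aS, bS - r)| <= r * e / 8.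
  by near: t.
have U3t : forall a', `|a' - aS| <= d3 -> `|G (Fb t) a' (bS + r) - tau (aS, bS + r)| <= r * e / 8.
  by near: t.
have U4t : forall a', `|a' - aS| <= d4 -> `|G (Fb t) a' (bS + 2 * r) - tau (aS, bS + 2 * r)| <= r * e / 8.
  by near: t.
move=> x y hx hy.
have ax : `|Fb (x * t) / Fb t - aS| <= dl.
  by rewrite aSE; apply: Axt; apply: lt_ch hx rhoa q1a.
have bx : `|Fb (y * t) / Fb t - bS| <= r.
  by rewrite bSE; apply: Ayt; exact: lt_ch hy rhoa q1b.
have TT : `|partial_v tau (x `^ (- alpha), y `^ (- alpha)) - partial_v tau (aS, bS)| < e / 4.
  apply: Hr1; try exact: powR_ge0.
  - by rewrite aSE; apply: P1; exact: lt_ch hx rhob q2a.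
  - by rewrite bSE; apply: P2; exact: lt_ch hy rhob q2b.
have [E1 E2] : Fb (x * t) = (Fb (x * t) / Fb t) * Fb t /\ Fb (y * t) = (Fb (y * t) / Fb t) * Fb t.
  by split; rewrite divfK // gt_eqF.
rewrite E1 E2.
clear Axt Ayt E1 E2.
move: (Fb (x * t) / Fb t) ax => a ax.
move: (Fb (y * t) / Fb t) bx => b bx.
move: (Fb t) sp lp ss U1t U2t U3t U4t => s sp lp ss U1t U2t U3t U4t.
have aB := a_bnd ax dlb bS0 sp ss.
have fd : forall h : R, 0 <= h <= 1 ->
    is_derive h 1 (fun v => C (a * s, v)) (partial_v C (a * s, h)).
  by move=> h hh; apply: pv_derive; apply: Cdiff.
have dm : forall h1 h2 : R, 0 <= h1 -> h1 <= h2 -> h2 <= 1 ->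
    partial_v C (a * s, h2) <= partial_v C (a * s, h1).
  by move=> h1 h2 p q w; apply: monv.
have [VU VL] := vsand fd dm sp r0 aS0 rb bx ss.
have QU := scale_up sp lp kappa_pos r0 VU.
have QL := scale_lo sp lp kappa_pos r0 VL.
have g1 := U1t a (le_ch ax dla d14a d12a).
have g2 := U2t a (le_ch ax dla d14a d12b).
have g3 := U3t a (le_ch ax dla d14b d34a).
have g4 := U4t a (le_ch ax dla d14b d34b).
exact: (fin_arith r0 e0 QU QL g1 g2 g3 g4 M1' M2' TV1 TV2 TT).
Unshelve. all: by end_near.
Qed.

End L1.

Theorem mainTheorem10 (R : realType) (d : measure_display) (T : measurableType d)
  (P : probability T R) (X Y : {RV P >-> R}) (F : R -> R) (alpha : R)
  (C : R * R -> R) (kappa : R) (l : R -> R) (tau : R * R -> R) :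
  (* Assumption A1 *)
  (forall w, 0 <= X w) -> (forall w, 0 <= Y w) ->
  (forall x, P [set w | X w <= x] = (F x)%:E) ->
  (forall x, P [set w | Y w <= x] = (F x)%:E) ->
  continuous F ->
  0 < alpha -> regularly_varying (- alpha) (Fbar F) ->
  (forall x y, P [set w | x < X w /\ y < Y w] = (C (Fbar F x, Fbar F y))%:E) ->
  (* Assumption A2 *)
  (forall u v, unit_square R (u, v) -> C (u, v) = C (v, u)) ->
  twice_differentiable_on (unit_square R) C ->
  1 <= kappa <= 2 ->
  slowly_varying_at0 l ->
  C1_on (quadrant R) tau ->
  (exists p, quadrant R p /\ tau p != 0) ->
  (forall u v, 0 <= u -> 0 <= v ->
     (C (u * t, v * t) / (t `^ kappa * l t)) @[t --> 0^'+] --> tau (u, v)) ->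
  (forall u1 u2 v, 0 <= u1 -> u1 <= u2 -> u2 <= 1 -> 0 <= v <= 1 ->
     partial_u C (u2, v) <= partial_u C (u1, v)) ->
  (forall u v1 v2, 0 <= u <= 1 -> 0 <= v1 -> v1 <= v2 -> v2 <= 1 ->
     partial_v C (u, v2) <= partial_v C (u, v1)) ->
  (* conclusion: uniform convergence on every compact B in (0,oo)^2,
     i.e. sup_B |...| -> 0 as t -> +oo *)
  forall B : set (R * R), compact B -> B `<=` open_quadrant R ->
  forall e : R, 0 < e ->
  \forall t \near +oo, forall p, B p ->
    `| partial_v C (Fbar F (p.1 * t), Fbar F (p.2 * t))
         / ((Fbar F t) `^ (kappa - 1) * l (Fbar F t))
       - partial_v tau (p.1 `^ (- alpha), p.2 `^ (- alpha)) | <= e.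
Proof.
Proof.
move=> X0 Y0 HFX HFY Fc apos rv HC Csym C2 hk [lpos _] [taud _ tauvc] _ lim monu monv B cptB Bq e e0.
have mono := @F_mono R d T P X F HFX.
have mX : forall z, measurable [set w | X w <= z].
  move=> z; have := measurable_funPTI X (measurable_itv `]-oo, z]).
  by congr measurable; apply/seteqP; split => w /=; rewrite in_itv /=.
have nneg : forall x, 0 <= Fbar F x.
  move=> x; rewrite /Fbar subr_ge0 -lee_fin -HFX.
  exact: probability_le1.
have Cdiff : forall u v : R, 0 <= u <= 1 -> 0 <= v <= 1 -> differentiable C (u, v).
  by move=> u v hu hv; have [] := C2 (u, v) (conj hu hv).
have kpos : 0 < kappa by case/andP: hk => h _; lra.
have taudiff : forall u v : R, 0 <= u -> 0 <= v -> differentiable tau (u, v).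
  by move=> u v hu hv; apply: taud; split.
have cov := (compact_near_coveringP B).1 cptB.
apply: (cov R +oo (fun t p => `|partial_v C (Fbar F (p.1 * t), Fbar F (p.2 * t))
         / ((Fbar F t) `^ (kappa - 1) * l (Fbar F t))
       - partial_v tau (p.1 `^ (- alpha), p.2 `^ (- alpha))| <= e)) => //.
move=> [xs ys] /Bq [/= xs0 ys0].
have [rho rho0 Hev] := @local R (Fbar F) alpha mono nneg apos rv C tau l kappa Cdiff kpos lpos taudiff tauvc lim monu monv xs ys e xs0 ys0 e0.
have [M [Mr HM]] := Hev.
exists ([set q : R * R | `|q.1 - xs| < rho /\ `|q.2 - ys| < rho], [set t | M < t]).
  split; last by exists M.
  apply/nbhs_ballP; exists rho => // q [/= h1 h2].
  by split; rewrite distrC.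
by move=> [q t] [/= [h1 h2] Ht]; exact: HM.
Qed.
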